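(* Let $k$ be an algebraically closed field of characteristic zero, $n\ge1$, $q\in k$ a primitive $2n$-th root of unity, $a\in k\setminus\{0\}$. Let $\mathfrak wH_{4n}$ be the weak Hopf algebra generated by $Z,X$ with $Z^{2n+1}=Z$, $ZX=qXZ$, $X^2=0$, $\Delta(Z)=Z\otimes Z+a(1-q^{-2})Z^{n+1}X\otimes ZX$, $\Delta(X)=X\otimes 1+Z^n\otimes X$, $\epsilon(Z)=1$, $\epsilon(X)=0$. Let $S_1$ be the $1$-dimensional module with $X$ acting by $0$ and $Z$ by $q$; $M_0$ the $2$-dimensional module with basis $v_1,v_2$, $Xv_1=v_2$, $Xv_2=0$, $Zv_1=v_1$, $Zv_2=qv_2$; $N_0$ the $1$-dimensional module on which $Z,X$ act by $0$. Let $b=[S_1]$, $c=[M_0]$, $d=[N_0]$ in the Green ring $r(\mathfrak wH_{4n})$. Then $r(\mathfrak wH_{4n})$ is generated as a ring by $b,c,d$, and the set $\{b^ic^j\mid 0\le i\le 2n-1,\ j=0,1\}\cup\{c^kd\mid k=0,1\}$ is a $\mathbb Z$-basis of $r(\mathfrak wH_{4n})$.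
   Context: The Green ring $r(A)$ of $A=\mathfrak wH_{4n}$ is the free abelian group on isomorphism classes $[M]$ of finite-dimensional $A$-modules modulo $[M\oplus N]=[M]+[N]$, with multiplication $[M][N]=[M\otimes N]$ where $M\otimes N$ is an $A$-module via $\Delta$. *)

(* Defs.v *)
From HB Require Import structures.
From mathcomp Require Import all_boot all_order all_algebra.
From mathcomp Require Import mxtens.
Set Implicit Arguments. Unset Strict Implicit. Unset Printing Implicit Defensive.
Import GRing.Theory.
Local Open Scope ring_scope.

Section WeakTaft.
Variable k : fieldType.

(* A finite-dimensional module over wH_{4n}: dimension m, and the matrices by
   which Z and X act on column vectors of k^m. *)
Definition wmod := {m : nat & ('M[k]_m * 'M[k]_m)%type}.
Definition mdim (M : wmod) : nat := tag M.
Definition mZ (M : wmod) : 'M[k]_(mdim M) := (tagged M).1.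
Definition mX (M : wmod) : 'M[k]_(mdim M) := (tagged M).2.
Definition mkMod m (Z X : 'M[k]_m) : wmod :=
  Tagged (fun m => ('M[k]_m * 'M[k]_m)%type) (Z, X).

Definition is_wmod (n : nat) (q : k) (M : wmod) : Prop :=
  [/\ mZ M ^+ (2 * n).+1 = mZ M,
      mZ M *m mX M = q *: (mX M *m mZ M) &
      mX M *m mX M = 0].

Definition dsum (M N : wmod) : wmod :=
  mkMod (block_mx (mZ M) 0 0 (mZ N)) (block_mx (mX M) 0 0 (mX N)).

(* tensor product M (x) N, A acting via
   Delta(Z) = Z(x)Z + a(1-q^{-2}) Z^{n+1}X (x) ZX,  Delta(X) = X(x)1 + Z^n(x)X *)
Definition tens (n : nat) (q a : k) (M N : wmod) : wmod :=
  mkMod (mZ M *t mZ N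
         + (a * (1 - q^-2)) *: ((mZ M ^+ n.+1 *m mX M) *t (mZ N *m mX N)))
        (mX M *t (1%:M : 'M[k]_(mdim N)) + mZ M ^+ n *t mX N).

Definition wiso (M N : wmod) : Prop :=
  exists (f : 'M[k]_(mdim N, mdim M)) (g : 'M[k]_(mdim M, mdim N)),
    [/\ g *m f = 1%:M, f *m g = 1%:M,
        f *m mZ M = mZ N *m f & f *m mX M = mX N *m f].

(* Formal Z-linear combinations of modules (free abelian group on modules). *)
Definition fz := seq (int * wmod).
Definition coef (x : fz) (M : wmod) : int := \sum_(e <- x | e.2 == M) e.1.
Definition all_valid (n : nat) (q : k) (x : fz) : Prop :=
  forall e, e \in x -> is_wmod n q e.2.

(* Generators of the relation subgroup: [M (+) N] - [M] - [N], and
   [M] - [M'] for isomorphic M, M' (passing to isomorphism classes). *)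
Definition green_rel (n : nat) (q : k) (r : fz) : Prop :=
  (exists M N, [/\ is_wmod n q M, is_wmod n q N &
                  r = [:: (1, dsum M N); (-1, M); (-1, N)]])
  \/ (exists M N, [/\ is_wmod n q M, is_wmod n q N, wiso M N &
                  r = [:: (1, M); (-1, N)]]).

Definition green_eq (n : nat) (q : k) (x y : fz) : Prop :=
  exists rs : seq (int * fz),
    (forall p, p \in rs -> green_rel n q p.2) /\
    forall M, coef x M - coef y M = \sum_(p <- rs) p.1 * coef p.2 M.

(* trivial module k_epsilon: Z acts by epsilon(Z) = 1, X by 0;
   its class is the identity of r(wH_{4n}) *)
Definition unitM : wmod := mkMod (1%:M : 'M[k]_1) 0.
Definition S1 (q : k) : wmod := mkMod (q%:M : 'M[k]_1) 0.
Definition N0 : wmod := mkMod (0 : 'M[k]_1) 0.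
Definition M0 (q : k) : wmod :=
  mkMod (\matrix_(i < 2, j < 2)
           (if i == j then (if (i == 0 :> nat) then 1 else q) else 0))
        (\matrix_(i < 2, j < 2)
           (if (i == 1 :> nat) && (j == 0 :> nat) then 1 else 0)).

Definition mpow (n : nat) (q a : k) (M : wmod) (i : nat) : wmod :=
  iter i (tens n q a M) unitM.

Definition bcMod n q a (i j : nat) : wmod :=
  tens n q a (mpow n q a (S1 q) i) (mpow n q a (M0 q) j).
Definition cdMod n q a (l : nat) : wmod :=
  tens n q a (mpow n q a (M0 q) l) N0.

(* words in the generators b (0), c (1), d (2); empty word = 1 *)
Definition genMod (q : k) (l : 'I_3) : wmod :=
  if (l == 0 :> nat) then S1 q else if (l == 1 :> nat) then M0 q else N0.
Definition wordMod n q a (w : seq 'I_3) : wmod :=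
  foldr (fun l acc => tens n q a (genMod q l) acc) unitM w.

Definition basis_comb n q a (lam : nat -> nat -> int) (mu : nat -> int) : fz :=
  [seq (lam i j, bcMod n q a i j) | i <- iota 0 (2 * n), j <- iota 0 2]
  ++ [seq (mu l, cdMod n q a l) | l <- iota 0 2].

End WeakTaft.

(* Main.v *)
Require Import Defs.
From HB Require Import structures.
From mathcomp Require Import all_boot all_order all_algebra.
From mathcomp Require Import mxtens.
Import GRing.Theory.
Local Open Scope ring_scope.
Set Implicit Arguments. Unset Strict Implicit. Unset Printing Implicit Defensive.

Section Basics.
Variable k : fieldType.
Variables (n : nat) (q a : k).

Lemma mxpow_intertw m p (f : 'M[k]_(p, m)) (A : 'M_m) (B : 'M_p) j :
  f *m A = B *m f -> f *m A ^+ j = B ^+ j *m f.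
Proof.
move=> fA; elim: j => [|j IH]; first by rewrite !expr0 mulmx1 mul1mx.
by rewrite !exprS -!mulmxE mulmxA fA -mulmxA IH mulmxA.
Qed.

Lemma wiso_refl (M : wmod k) : wiso M M.
Proof. by exists 1%:M, 1%:M; rewrite !mulmx1 !mul1mx. Qed.

Lemma conj_eq m p (f : 'M[k]_(p, m)) (g : 'M_(m, p)) (A : 'M_m) (B : 'M_p) :
  g *m f = 1%:M -> f *m g = 1%:M -> f *m A = B *m f -> g *m B = A *m g.
Proof.
move=> gf fg fA.
by rewrite -[g *m B]mulmx1 -fg !mulmxA -[g *m B *m f]mulmxA -fA !mulmxA gf mul1mx.
Qed.

Lemma conj_eq' m p (f : 'M[k]_(p, m)) (g : 'M_(m, p)) (A : 'M_m) (B : 'M_p) :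
  f *m g = 1%:M -> f *m A = B *m f -> B = f *m A *m g.
Proof. by move=> fg fA; rewrite fA -mulmxA fg mulmx1. Qed.

Lemma wiso_sym (M N : wmod k) : wiso M N -> wiso N M.
Proof.
case=> f [g [gf fg fZ fX]]; exists g, f; split => //; [exact: conj_eq fZ | exact: conj_eq fX].
Qed.

Lemma wiso_trans (M N P : wmod k) : wiso M N -> wiso N P -> wiso M P.
Proof.
case=> f [g [gf fg fZ fX]] [f' [g' [gf' fg' fZ' fX']]].
exists (f' *m f), (g *m g'); split.
- by rewrite mulmxA -[g *m g' *m f']mulmxA gf' mulmx1 gf.
- by rewrite mulmxA -[f' *m f *m g]mulmxA fg mulmx1 fg'.
- by rewrite -mulmxA fZ mulmxA fZ' mulmxA.
- by rewrite -mulmxA fX mulmxA fX' mulmxA.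
Qed.

Lemma wiso_valid (M N : wmod k) : wiso M N -> is_wmod n q M -> is_wmod n q N.
Proof.
case=> f [g [gf fg fZ fX]] [VZ VZX VX].
have eZ := conj_eq' fg fZ; have eX := conj_eq' fg fX.
have pw : forall j, mZ N ^+ j = f *m mZ M ^+ j *m g.
  by move=> j; rewrite (mxpow_intertw j fZ) -mulmxA fg mulmx1.
split.
- by rewrite pw VZ -eZ.
- rewrite eZ eX -!mulmxA !(mulmxA g) gf !mul1mx (mulmxA (mZ M)) VZX.
  by rewrite -scalemxAl -scalemxAr !mulmxA.
- by rewrite eX -!mulmxA (mulmxA g) gf mul1mx (mulmxA (mX M)) VX mul0mx mulmx0.
Qed.

Lemma block_diag_mul m1 m2 (A B : 'M[k]_m1) (C D : 'M_m2) :
  block_mx A 0 0 C *m block_mx B 0 0 D = block_mx (A *m B) 0 0 (C *m D).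
Proof. by rewrite mulmx_block !mulmx0 !mul0mx !addr0 !add0r. Qed.

Lemma block_diag_pow m1 m2 (A : 'M[k]_m1) (C : 'M_m2) j :
  (block_mx A 0 0 C : 'M_(m1 + m2)) ^+ j = block_mx (A ^+ j) 0 0 (C ^+ j).
Proof.
elim: j => [|j IH]; first by rewrite !expr0 -scalar_mx_block.
by rewrite !exprS IH -!mulmxE block_diag_mul.
Qed.

Lemma dsum_valid (M N : wmod k) :
  is_wmod n q (dsum M N) <-> is_wmod n q M /\ is_wmod n q N.
Proof.
have e0 : (0 : 'M[k]_(mdim M + mdim N)) = block_mx 0 0 0 0 by rewrite block_mx0.
rewrite /is_wmod /dsum /mZ /mX /= block_diag_pow !block_diag_mul scale_block_mx !scaler0.
rewrite [in X in [/\ _, _ & X]]e0.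
split.
  case=> /eq_block_mx [? _ _ ?] /eq_block_mx [? _ _ ?] /eq_block_mx [? _ _ ?].
  by split; split.
by case=> [[-> -> ->] [-> -> ->]].
Qed.

End Basics.

Section Green.
Variable k : fieldType.
Variables (n : nat) (q : k).

Implicit Types x y : fz k.

Lemma coef_nil (M : wmod k) : coef [::] M = 0.
Proof. by rewrite /coef big_nil. Qed.

Lemma coef_cons (e : int * wmod k) x M :
  coef (e :: x) M = (if e.2 == M then e.1 else 0) + coef x M.
Proof. by rewrite /coef big_cons; case: ifP => _; rewrite ?add0r. Qed.

Lemma coef_cat x y M : coef (x ++ y) M = coef x M + coef y M.
Proof. by rewrite /coef big_cat. Qed.

Definition sc (c : int) x : fz k := [seq (c * e.1, e.2) | e <- x].

Lemma coef_sc c x M : coef (sc c x) M = c * coef x M.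
Proof.
elim: x => [|e x IH]; first by rewrite /sc /= !coef_nil mulr0.
by rewrite /= !coef_cons IH /= mulrDr; case: ifP; rewrite ?mulr0.
Qed.

Lemma green_eq_ext x x' y y' : (forall M, coef x M = coef x' M) ->
  (forall M, coef y M = coef y' M) -> green_eq n q x y -> green_eq n q x' y'.
Proof. by move=> ex ey [rs [H1 H2]]; exists rs; split => // M; rewrite -ex -ey. Qed.

Lemma green_eq_refl x : green_eq n q x x.
Proof. exists [::]; split => [p|M]; first by rewrite in_nil. by rewrite big_nil subrr. Qed.

Lemma green_eq_sym x y : green_eq n q x y -> green_eq n q y x.
Proof.
case=> rs [H1 H2]; exists [seq (- p.1, p.2) | p <- rs]; split.
  by move=> p /mapP [p' p'in ->]; exact: (H1 _ p'in).
move=> M; rewrite big_map -opprB H2 -sumrN; apply: eq_bigr => p _.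
by rewrite mulNr.
Qed.

Lemma green_eq_trans x y z : green_eq n q x y -> green_eq n q y z -> green_eq n q x z.
Proof.
case=> rs [H1 H2] [rs' [H1' H2']]; exists (rs ++ rs'); split.
  by move=> p; rewrite mem_cat => /orP [/H1|/H1'].
by move=> M; rewrite big_cat /= -H2 -H2' addrA subrK.
Qed.

Lemma green_eq_cat x y x' y' : green_eq n q x y -> green_eq n q x' y' ->
  green_eq n q (x ++ x') (y ++ y').
Proof.
case=> rs [H1 H2] [rs' [H1' H2']]; exists (rs ++ rs'); split.
  by move=> p; rewrite mem_cat => /orP [/H1|/H1'].
by move=> M; rewrite big_cat /= -H2 -H2' !coef_cat opprD addrACA.
Qed.

Lemma green_eq_sc c x y : green_eq n q x y -> green_eq n q (sc c x) (sc c y).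
Proof.
case=> rs [H1 H2]; exists [seq (c * p.1, p.2) | p <- rs]; split.
  by move=> p /mapP [p' p'in ->]; exact: (H1 _ p'in).
move=> M; rewrite big_map !coef_sc -mulrBr H2 mulr_sumr; apply: eq_bigr => p _.
by rewrite mulrA.
Qed.

Lemma green_eq_iso (M N : wmod k) : is_wmod n q M -> is_wmod n q N -> wiso M N ->
  green_eq n q [:: (1, M)] [:: (1, N)].
Proof.
move=> VM VN iMN; exists [:: (1, [:: (1, M); (-1, N)])]; split.
  by move=> p; rewrite inE => /eqP -> /=; right; exists M, N.
move=> P; rewrite big_cons big_nil addr0 mul1r !coef_cons !coef_nil !addr0 /=.
by case: (N == P); rewrite ?subr0 ?addr0.
Qed.

Lemma green_eq_dsum (M N : wmod k) : is_wmod n q M -> is_wmod n q N ->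
  green_eq n q [:: (1, dsum M N)] [:: (1, M); (1, N)].
Proof.
move=> VM VN; exists [:: (1, [:: (1, dsum M N); (-1, M); (-1, N)])]; split.
  by move=> p; rewrite inE => /eqP -> /=; left; exists M, N.
move=> P; rewrite big_cons big_nil addr0 mul1r !coef_cons !coef_nil !addr0 /=.
by case: (M == P); case: (N == P); rewrite ?subr0 ?addr0 ?sub0r ?add0r ?opprD.
Qed.

Definition Phi (phi : wmod k -> int) x := \sum_(e <- x) e.1 * phi e.2.

Lemma Phi_coef (phi : wmod k -> int) (s : seq (wmod k)) x : uniq s ->
  {subset [seq e.2 | e <- x] <= s} -> Phi phi x = \sum_(M <- s) coef x M * phi M.
Proof.
move=> us; elim: x => [|e x IH] sub.
  by rewrite /Phi big_nil big1 // => M _; rewrite coef_nil mul0r.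
have e2s : e.2 \in s by apply: sub; rewrite inE eqxx.
rewrite /Phi big_cons -/(Phi phi x) IH; last by move=> M Min; apply: sub; rewrite inE Min orbT.
rewrite (bigD1_seq e.2) //= [X in _ = X](bigD1_seq e.2) //= coef_cons eqxx.
rewrite mulrDl -addrA; congr (_ + _); congr (_ + _).
by apply: eq_bigr => M neM; rewrite coef_cons eq_sym (negPf neM) add0r.
Qed.

Lemma Phi_green (phi : wmod k -> int) :
  (forall M N, phi (dsum M N) = phi M + phi N) ->
  (forall M N, wiso M N -> phi M = phi N) ->
  forall x y, green_eq n q x y -> Phi phi x = Phi phi y.
Proof.
move=> Hd Hi x y [rs [H1 H2]].
pose s := undup ([seq e.2 | e <- x] ++ [seq e.2 | e <- y] ++
                 flatten [seq [seq e.2 | e <- p.2] | p <- rs]).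
have us : uniq s by apply: undup_uniq.
have Px : Phi phi x = \sum_(M <- s) coef x M * phi M.
  by apply: Phi_coef => // M Min; rewrite mem_undup mem_cat Min.
have Py : Phi phi y = \sum_(M <- s) coef y M * phi M.
  by apply: Phi_coef => // M Min; rewrite mem_undup !mem_cat Min orbT.
apply/eqP; rewrite -subr_eq0 Px Py -sumrB.
under eq_bigr => M _ do rewrite -mulrBl H2 mulr_suml.
rewrite exchange_big /= big1_seq // => p pin /=.
have -> : \sum_(M <- s) p.1 * coef p.2 M * phi M = p.1 * Phi phi p.2.
  rewrite (@Phi_coef phi s) // ?mulr_sumr; last first.
    move=> M Min; rewrite mem_undup !mem_cat; apply/orP; right; apply/orP; right.
    by apply/flattenP; exists [seq e.2 | e <- p.2] => //; apply/mapP; exists p.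
  by apply: eq_bigr => M _; rewrite mulrA.
case: (H1 p pin) => [[M [N [VM VN ->]]]|[M [N [VM VN iMN ->]]]];
  rewrite /Phi !big_cons big_nil /=.
  by rewrite Hd !mul1r !mulN1r addr0 -opprD subrr mulr0.
by rewrite (Hi _ _ iMN) mul1r mulN1r addr0 subrr mulr0.
Qed.

End Green.
Section Tens.
Variable k : fieldType.
Variables (n : nat) (q a : k).

Lemma mxpow_intertw' m p (f : 'M[k]_(p, m)) (A : 'M_m) (B : 'M_p) j :
  f *m A = B *m f -> f *m A ^+ j = B ^+ j *m f.
Proof.
move=> fA; elim: j => [|j IH]; first by rewrite !expr0 mulmx1 mul1mx.
by rewrite !exprS -!mulmxE mulmxA fA -mulmxA IH mulmxA.
Qed.

Lemma block_diag_mul' m1 m2 (A B : 'M[k]_m1) (C D : 'M_m2) :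
  block_mx A 0 0 C *m block_mx B 0 0 D = block_mx (A *m B) 0 0 (C *m D).
Proof. by rewrite mulmx_block !mulmx0 !mul0mx !addr0 !add0r. Qed.

Lemma block_diag_pow' m1 m2 (A : 'M[k]_m1) (C : 'M_m2) j :
  (block_mx A 0 0 C : 'M_(m1 + m2)) ^+ j = block_mx (A ^+ j) 0 0 (C ^+ j).
Proof.
elim: j => [|j IH]; first by rewrite !expr0 -scalar_mx_block.
by rewrite !exprS IH -!mulmxE block_diag_mul'.
Qed.

Lemma tens11 m p : (1%:M : 'M[k]_m) *t (1%:M : 'M_p) = 1%:M.
Proof.
apply/matrixP => i j.
case: (mxtens_indexP i) => i1 i2; case: (mxtens_indexP j) => j1 j2.
rewrite tensmxE !mxE -natrM mulnb (can_eq (@mxtens_indexK _ _)).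
by rewrite xpair_eqE.
Qed.

Lemma tens_intertw m m' p p' (f : 'M[k]_(m', m)) (f' : 'M_(p', p)) A A' B B' :
  f *m A = A' *m f -> f' *m B = B' *m f' ->
  (f *t f') *m (A *t B) = (A' *t B') *m (f *t f').
Proof. by move=> e1 e2; rewrite !tensmx_mul e1 e2. Qed.

Lemma tens_iso (M M' N N' : wmod k) : wiso M M' -> wiso N N' ->
  wiso (tens n q a M N) (tens n q a M' N').
Proof.
case=> f [g [gf fg fZ fX]] [f' [g' [gf' fg' fZ' fX']]].
exists (f *t f'), (g *t g'); split.
- by rewrite tensmx_mul gf gf' tens11.
- by rewrite tensmx_mul fg fg' tens11.
- rewrite /tens /mZ /mX /= -/(mZ M) -/(mZ N) -/(mZ M') -/(mZ N') -/(mX M) -/(mX N) -/(mX M') -/(mX N').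
  rewrite mulmxDr mulmxDl -!scalemxAr -!scalemxAl.
  rewrite (tens_intertw fZ fZ'); congr (_ + _ *: _).
  apply: tens_intertw.
    by rewrite mulmxA (mxpow_intertw' _ fZ) -!mulmxA fX.
  by rewrite mulmxA fZ' -!mulmxA fX'.
- rewrite /tens /mZ /mX /= -/(mZ M) -/(mZ N) -/(mZ M') -/(mZ N') -/(mX M) -/(mX N) -/(mX M') -/(mX N').
  have e1 : f' *m 1%:M = 1%:M *m f' by rewrite mulmx1 mul1mx.
  by rewrite mulmxDr mulmxDl (tens_intertw fX e1) (tens_intertw (mxpow_intertw' _ fZ) fX').
Qed.

Definition Sm (c : k) : wmod k := mkMod (c%:M : 'M[k]_1) 0.
Definition Dm (l x : k) : wmod k :=
  mkMod (block_mx l%:M 0 0 (q * l)%:M : 'M[k]_(1 + 1)) (block_mx 0 0 x%:M 0).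

Lemma scalar_pow m (c : k) j : (c%:M : 'M_m) ^+ j = (c ^+ j)%:M.
Proof.
elim: j => [|j IH]; first by rewrite !expr0.
by rewrite !exprS IH -mulmxE -scalar_mxM.
Qed.

Lemma o0 (H : (0 < 2)%N) : Ordinal H = lshift 1 (ord0 : 'I_1). Proof. by apply: val_inj. Qed.
Lemma o1 (H : (1 < 2)%N) : Ordinal H = rshift 1 (ord0 : 'I_1). Proof. by apply: val_inj. Qed.

Lemma M0D : M0 q = Dm 1 1.
Proof.
rewrite /M0 /Dm; congr mkMod; apply/matrixP => i j;
 case: i => [[|[|i]] Hi] //; case: j => [[|[|j]] Hj] //; rewrite ?o0 ?o1;
 rewrite ?(@block_mxEul _ 1 1 1 1) ?(@block_mxEur _ 1 1 1 1) ?(@block_mxEdl _ 1 1 1 1)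
   ?(@block_mxEdr _ 1 1 1 1) !mxE /= ?mulr1 //.
Qed.

Lemma N0S : N0 k = Sm 0.
Proof. by rewrite /N0 /Sm raddf0. Qed.

Lemma unitS : unitM k = Sm 1.
Proof. by []. Qed.

Lemma S1S : S1 q = Sm q.
Proof. by []. Qed.

Lemma T1 (c d : k) : tens n q a (Sm c) (Sm d) = Sm (c * d).
Proof.
rewrite /tens /Sm /mZ /mX /=; congr mkMod.
  by rewrite mulmx0 tens0mx scaler0 addr0 tens_scalar_mx castmx_id scale_scalar_mx.
by rewrite tens0mx tensmx0 addr0.
Qed.

Lemma T2 (c l x : k) : tens n q a (Sm c) (Dm l x) = Dm (c * l) (c ^+ n * x).
Proof.
rewrite /tens /Sm /Dm /mZ /mX /=; congr mkMod.
  rewrite mulmx0 tens0mx scaler0 addr0 tens_scalar_mx castmx_id scale_block_mx !scaler0.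
  by rewrite !scale_scalar_mx mulrCA.
rewrite tens0mx add0r scalar_pow tens_scalar_mx castmx_id scale_block_mx !scaler0.
by rewrite !scale_scalar_mx.
Qed.

Lemma T3 (l x : k) : tens n q a (Dm l x) (Sm 1) = Dm l x.
Proof.
rewrite /tens /Sm /Dm /mZ /mX /=; congr mkMod.
  by rewrite mulmx0 tensmx0 scaler0 addr0 tens_mx_scalar castmx_id scale1r.
by rewrite tensmx0 addr0 tens_mx_scalar castmx_id scale1r.
Qed.

Lemma T4 (l x : k) : tens n q a (Dm l x) (Sm 0) = Dm 0 x.
Proof.
rewrite /tens /Sm /Dm /mZ /mX /=; congr mkMod.
  by rewrite mulmx0 tensmx0 scaler0 addr0 tens_mx_scalar castmx_id scale0r mulr0 raddf0 block_mx0.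
by rewrite tensmx0 addr0 tens_mx_scalar castmx_id scale1r.
Qed.

Lemma mZ_Dm l x : mZ (Dm l x) = block_mx l%:M 0 0 (q * l)%:M. Proof. by []. Qed.
Lemma mX_Dm l x : mX (Dm l x) = block_mx 0 0 x%:M 0. Proof. by []. Qed.
Lemma mZ_Sm c : mZ (Sm c) = c%:M. Proof. by []. Qed.
Lemma mX_Sm c : mX (Sm c) = 0. Proof. by []. Qed.

Lemma Dm_iso (l x : k) : x != 0 -> wiso (Dm l x) (Dm l 1).
Proof.
move=> x0; exists (block_mx x%:M 0 0 1%:M), (block_mx x^-1%:M 0 0 1%:M); rewrite !mZ_Dm !mX_Dm.
split; rewrite !mulmx_block !mulmx0 !mul0mx !addr0 !add0r ?mulmx1 ?mul1mx.
- by rewrite -scalar_mxM mulVf // -scalar_mx_block.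
- by rewrite -scalar_mxM mulfV // -scalar_mx_block.
- by rewrite -!scalar_mxM mulrC.
- by [].
Qed.

Lemma Sm_valid (c : k) : c ^+ (2 * n).+1 = c -> is_wmod n q (Sm c).
Proof.
move=> hc; rewrite /is_wmod /Sm /mZ /mX /=; split.
- by rewrite scalar_pow hc.
- by rewrite mulmx0 mul0mx scaler0.
- by rewrite mulmx0.
Qed.

Lemma Dm_valid (l x : k) : q ^+ (2 * n) = 1 -> l ^+ (2 * n).+1 = l -> is_wmod n q (Dm l x).
Proof.
move=> hq hl; rewrite /is_wmod mZ_Dm mX_Dm; split.
- by rewrite block_diag_pow' !scalar_pow exprMn (exprS q) hq mulr1 hl.
- rewrite !mulmx_block !mulmx0 !mul0mx !addr0 !add0r scale_block_mx !scaler0.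
  by rewrite -!scalar_mxM scale_scalar_mx -mulrA [x * l]mulrC.
- by rewrite (@mulmx_block _ 1 1 1 1 1 1) !mulmx0 !mul0mx !addr0 block_mx0.
Qed.

End Tens.

Section Reps.
Variable k : fieldType.
Variables (n : nat) (q a : k).
Hypothesis n_gt0 : (0 < n)%N.
Hypothesis qprim : (2 * n).-primitive_root q.

Local Notation Dm := (Dm q).

Lemma hq : q ^+ (2 * n) = 1.
Proof. exact: prim_expr_order. Qed.

Lemma q_neq0 : q != 0.
Proof.
have n0 : (2 * n)%N != 0%N by rewrite muln_eq0 negb_or /= -lt0n n_gt0.
apply/eqP => q0; have := hq; rewrite q0 expr0n (negPf n0) => /esym/eqP.
by rewrite oner_eq0.
Qed.

Lemma qpow_neq0 i : q ^+ i != 0.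
Proof. by rewrite expf_neq0 // q_neq0. Qed.

Lemma qpow_root i : (q ^+ i) ^+ (2 * n).+1 = q ^+ i.
Proof. by rewrite exprS -exprM mulnC exprM hq expr1n mulr1. Qed.

Lemma zero_root : (0 : k) ^+ (2 * n).+1 = 0.
Proof. by rewrite expr0n. Qed.

Lemma mpowS i : wiso (mpow n q a (S1 q) i) (Sm (q ^+ i)).
Proof.
elim: i => [|i IH]; first by rewrite expr0 /mpow /=; exact: wiso_refl.
rewrite /mpow iterS -/(mpow n q a (S1 q) i).
apply: (wiso_trans (tens_iso n q a (wiso_refl (S1 q)) IH)).
by rewrite S1S T1 -exprS; exact: wiso_refl.
Qed.

Lemma mpowM1 : mpow n q a (M0 q) 1 = Dm 1 1.
Proof. by rewrite /mpow /= M0D unitS T3. Qed.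

Lemma bc0 i : wiso (bcMod n q a i 0) (Sm (q ^+ i)).
Proof.
rewrite /bcMod; apply: (wiso_trans (tens_iso n q a (mpowS i) (wiso_refl _))).
by rewrite /mpow /= unitS T1 mulr1; exact: wiso_refl.
Qed.

Lemma bc1 i : wiso (bcMod n q a i 1) (Dm (q ^+ i) 1).
Proof.
rewrite /bcMod mpowM1; apply: (wiso_trans (tens_iso n q a (mpowS i) (wiso_refl _))).
rewrite T2 mulr1; apply: Dm_iso.
by rewrite mulr1 expf_neq0 // qpow_neq0.
Qed.

Lemma cd0 : cdMod n q a 0 = Sm 0.
Proof. by rewrite /cdMod /mpow /= unitS N0S T1 mul1r. Qed.

Lemma cd1 : cdMod n q a 1 = Dm 0 1.
Proof. by rewrite /cdMod mpowM1 N0S T4. Qed.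

Definition b3 : 'I_3 := @Ordinal 3 0 isT.
Definition c3 : 'I_3 := @Ordinal 3 1 isT.
Definition d3 : 'I_3 := @Ordinal 3 2 isT.

Lemma wordMod_cat i w :
  wordMod n q a (nseq i b3 ++ w) = iter i (tens n q a (S1 q)) (wordMod n q a w).
Proof. by elim: i => //= i ->. Qed.

Lemma iterSm i W c : wiso W (Sm c) ->
  wiso (iter i (tens n q a (S1 q)) W) (Sm (q ^+ i * c)).
Proof.
move=> H; elim: i => [|i IH]; first by rewrite expr0 mul1r.
rewrite iterS; apply: (wiso_trans (tens_iso n q a (wiso_refl (S1 q)) IH)).
by rewrite S1S T1 mulrA -exprS; exact: wiso_refl.
Qed.

Lemma iterDm i W l : wiso W (Dm l 1) ->
  wiso (iter i (tens n q a (S1 q)) W) (Dm (q ^+ i * l) 1).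
Proof.
move=> H; elim: i => [|i IH]; first by rewrite expr0 mul1r.
rewrite iterS; apply: (wiso_trans (tens_iso n q a (wiso_refl (S1 q)) IH)).
rewrite S1S T2 mulrA -exprS mulr1; apply: Dm_iso.
by rewrite expf_neq0 // q_neq0.
Qed.

Lemma w0 i : wiso (wordMod n q a (nseq i b3)) (Sm (q ^+ i)).
Proof.
rewrite -[nseq i b3]cats0 wordMod_cat -[q ^+ i]mulr1; apply: iterSm.
by rewrite /wordMod /= unitS; exact: wiso_refl.
Qed.

Lemma w1 i : wiso (wordMod n q a (nseq i b3 ++ [:: c3])) (Dm (q ^+ i) 1).
Proof.
rewrite wordMod_cat -[q ^+ i]mulr1; apply: iterDm.
have -> : wordMod n q a [:: c3] = tens n q a (M0 q) (unitM k) by [].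
by rewrite unitS M0D T3; exact: wiso_refl.
Qed.

Lemma wd : wordMod n q a [:: d3] = Sm 0.
Proof.
have -> : wordMod n q a [:: d3] = tens n q a (N0 k) (unitM k) by [].
by rewrite unitS N0S T1 mul0r.
Qed.

Lemma wcd : wordMod n q a [:: c3; d3] = Dm 0 1.
Proof.
have -> : wordMod n q a [:: c3; d3] = tens n q a (M0 q) (tens n q a (N0 k) (unitM k)) by [].
by rewrite unitS N0S T1 mul0r M0D T4.
Qed.

End Reps.

Section Split.
Variable k : fieldType.

Lemma split_mod (M : wmod k) d (V : 'M_(mdim M, d)) (P : 'M_(d, mdim M)) (ZB XB : 'M_d) :
  P *m V = 1%:M -> mZ M *m V = V *m ZB -> mX M *m V = V *m XB ->
  P *m mZ M = ZB *m P -> P *m mX M = XB *m P ->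
  (0 < d)%N ->
  exists M' : wmod k, (mdim M' < mdim M)%N /\ wiso M (dsum (mkMod ZB XB) M').
Proof.
move=> PV ZV XV PZ PX d_gt0.
set E := 1%:M - V *m P.
have EV : E *m V = 0 by rewrite mulmxBl mul1mx -mulmxA PV mulmx1 subrr.
have PE : P *m E = 0 by rewrite mulmxBr mulmx1 mulmxA PV mul1mx subrr.
have EE : E *m E = E by rewrite {1}/E mulmxBl mul1mx -mulmxA PE mulmx0 subr0.
have [C [C' [CC [L LC] [R CR]]]] : exists (C : 'M_(mdim M, \rank E)) (C' : 'M_(\rank E, mdim M)),
   [/\ C *m C' = E, exists L, L *m C = 1%:M & exists R, C' *m R = 1%:M].
  exists (col_base E), (row_base E); split; first exact: mulmx_base.
    by apply/row_fullP; exact: col_base_full.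
  by apply/row_freeP; exact: row_base_free.
have eC' : C' = L *m E.
  have -> : L *m E = L *m C *m C' by rewrite -mulmxA CC.
  by rewrite LC mul1mx.
have eC : C = E *m R.
  have -> : E *m R = C *m (C' *m R) by rewrite mulmxA CC.
  by rewrite CR mulmx1.
have C'V : C' *m V = 0 by rewrite eC' -mulmxA EV mulmx0.
have PC : P *m C = 0 by rewrite eC mulmxA PE mul0mx.
have C'C : C' *m C = 1%:M.
  have e : L *m (C *m C') *m (C *m C') *m R = C' *m C.
    by rewrite !mulmxA LC mul1mx -!mulmxA CR mulmx1.
  rewrite -e CC -(mulmxA L E E) EE.
  have -> : L *m E *m R = L *m C *m (C' *m R) by rewrite mulmxA -(mulmxA L C C') CC.
  by rewrite LC CR mulmx1.
have hZ : C' *m mZ M *m C *m C' = C' *m mZ M.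
  rewrite -mulmxA CC /E mulmxBr mulmx1 !mulmxA -(mulmxA C') ZV mulmxA C'V !mul0mx subr0 //.
have hX : C' *m mX M *m C *m C' = C' *m mX M.
  rewrite -mulmxA CC /E mulmxBr mulmx1 !mulmxA -(mulmxA C') XV mulmxA C'V !mul0mx subr0 //.
exists (mkMod (C' *m mZ M *m C) (C' *m mX M *m C)); split.
  rewrite /= ltn_neqAle rank_leq_row andbT; apply/negP => /eqP rE.
  have Eu : E \in unitmx by rewrite -row_full_unit /row_full rE.
  have V0 : V = 0 by rewrite -[V]mul1mx -(mulVmx Eu) -mulmxA EV mulmx0.
  move: PV; rewrite V0 mulmx0 => /(congr1 (fun A : 'M_d => A (Ordinal d_gt0) (Ordinal d_gt0))).
  by rewrite !mxE eqxx /= => /eqP; rewrite eq_sym oner_eq0.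
exists (col_mx P C'), (row_mx V C); split.
- by rewrite mul_row_col CC /E addrC subrK.
- by rewrite mul_col_row PV PC C'V C'C -scalar_mx_block.
- rewrite /dsum /mZ /= -/(mZ M).
  by rewrite mul_col_mx mul_block_col !mul0mx !addr0 add0r PZ hZ.
- rewrite /dsum /mX /= -/(mX M).
  by rewrite mul_col_mx mul_block_col !mul0mx !addr0 add0r PX hX.
Qed.

Lemma diag_entry_pow m (d : 'rV[k]_m) j i : ((diag_mx d) ^+ j) i i = (d 0 i) ^+ j.
Proof.
elim: j => [|j IH]; first by rewrite !expr0 mxE eqxx.
by rewrite !exprS -mulmxE mul_diag_mx mxE IH.
Qed.

Lemma delta_diag m (d : 'rV[k]_m) i : (delta_mx 0 i : 'rV_m) *m diag_mx d = d 0 i *: delta_mx 0 i.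
Proof.
apply/matrixP => a b; rewrite mul_mx_diag !mxE.
by case: (eqVneq b i) => [->|]; rewrite ?andbT ?andbF ?mul0r ?mulr0 // mulrC.
Qed.

Lemma diag_delta m (d : 'rV[k]_m) j : diag_mx d *m (delta_mx j 0 : 'cV_m) = d 0 j *: delta_mx j 0.
Proof.
apply/matrixP => a b; rewrite mul_diag_mx !mxE.
by case: (eqVneq a j) => [->|]; rewrite ?andbT ?andbF ?mul0r ?mulr0.
Qed.

Lemma delta_mid m (A : 'M[k]_m) i j : (delta_mx 0 i : 'rV_m) *m A *m (delta_mx j 0 : 'cV_m) = (A i j)%:M.
Proof. by rewrite -rowE -colE [LHS]mx11_scalar !mxE. Qed.

Lemma delta11 : (delta_mx 0 0 : 'M[k]_1) = 1%:M.
Proof. by apply/matrixP => a b; rewrite !ord1 !mxE. Qed.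

End Split.

Section Diag.
Variable k : fieldType.
Variables (n : nat) (q : k).
Hypothesis n_gt0 : (0 < n)%N.
Hypothesis qprim : (2 * n).-primitive_root q.

Definition repshape (B : wmod k) :=
  (exists c, B = Sm c /\ c ^+ (2 * n).+1 = c) \/
  (exists l, B = Dm q l 1 /\ l ^+ (2 * n).+1 = l).

Lemma split_diag m (d : 'rV[k]_m) (X : 'M_m) : (0 < m)%N ->
  is_wmod n q (mkMod (diag_mx d) X) ->
  exists (B M' : wmod k), [/\ (mdim M' < m)%N, wiso (mkMod (diag_mx d) X) (dsum B M') & repshape B].
Proof.
move=> m_gt0 [VZ VZX VX].
have VZ' : forall i, d 0 i ^+ (2 * n).+1 = d 0 i.
  move=> i; have := congr1 (fun A : 'M_m => A i i) VZ; rewrite /= diag_entry_pow => ->.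
  by rewrite mxE eqxx.
have VZX' : forall i j, d 0 i * X i j = q * (X i j * d 0 j).
  move=> i j; have := congr1 (fun A : 'M_m => A i j) VZX.
  by rewrite /= mul_diag_mx mxE => ->; rewrite mul_mx_diag !mxE.
have {}VZX : diag_mx d *m X = q *: (X *m diag_mx d) by exact: VZX.
have {}VX : X *m X = 0 by exact: VX.
case: (pickP (fun ij : 'I_m * 'I_m => X ij.1 ij.2 != 0)) => [[i j] /= cnz|X0].
  set c := X i j in cnz.
  have q0 : q != 0.
    apply/eqP => q0; move: (prim_expr_order qprim); rewrite q0 expr0n.
    have -> : (2 * n == 0)%N = false by rewrite muln_eq0 /= eqn0Ngt n_gt0.
    by move/eqP; rewrite eq_sym oner_eq0.
  have dij : d 0 i = q * d 0 j.
    by apply: (mulIf cnz); rewrite VZX' [X i j * _]mulrC mulrA.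
  pose v : 'cV[k]_m := delta_mx j 0.
  pose w := X *m v.
  pose phi : 'rV[k]_m := c^-1 *: delta_mx 0 i.
  pose s := (phi *m v) 0 0.
  pose r1 := phi *m X.
  pose r2 := phi - s *: r1.
  have f1 : r1 *m v = 1%:M.
    by rewrite /r1 /phi -!scalemxAl delta_mid scale_scalar_mx mulVf.
  have f2 : r1 *m w = 0 by rewrite /r1 /w mulmxA -(mulmxA phi) VX mulmx0 mul0mx.
  have f4 : r2 *m v = 0.
    by rewrite /r2 mulmxBl -(scalemxAl s r1) f1 scalemx1 {1}[phi *m v]mx11_scalar subrr.
  have f5 : r2 *m w = 1%:M.
    by rewrite /r2 mulmxBl -(scalemxAl s r1) f2 scaler0 subr0 /w mulmxA f1.
  have Zv : diag_mx d *m v = v *m (d 0 j)%:M by rewrite diag_delta mul_mx_scalar.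
  have Zw : diag_mx d *m w = w *m (q * d 0 j)%:M.
    rewrite /w mulmxA VZX -scalemxAl -mulmxA Zv mulmxA mul_mx_scalar mul_mx_scalar.
    by rewrite scalerA.
  have phiZ : phi *m diag_mx d = d 0 i *: phi by rewrite /phi -scalemxAl delta_diag scalerA mulrC -scalerA.
  have XZ : X *m diag_mx d = q^-1 *: (diag_mx d *m X) by rewrite VZX scalerA mulVf // scale1r.
  have r1Z : r1 *m diag_mx d = d 0 j *: r1.
    rewrite /r1 -mulmxA XZ -scalemxAr mulmxA phiZ -scalemxAl scalerA dij mulrA mulVf //.
    by rewrite mul1r.
  have sd : s * d 0 j = s * d 0 i.
    case: (eqVneq i j) => [->|ne] //.
    suff -> : s = 0 by rewrite !mul0r.
    by rewrite /s /phi /v -scalemxAl mul_delta_mx_0 // scaler0 mxE.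
  have r2Z : r2 *m diag_mx d = (q * d 0 j) *: r2.
    rewrite /r2 mulmxBl phiZ -(scalemxAl s r1) r1Z scalerBr !scalerA -dij; congr (_ - _ *: _).
    by rewrite sd mulrC.
  have r1X : r1 *m X = 0 by rewrite /r1 -mulmxA VX mulmx0.
  have r2X : r2 *m X = r1 by rewrite /r2 mulmxBl -(scalemxAl s r1) r1X scaler0 subr0.
  have := @split_mod k (mkMod (diag_mx d) X) (1 + 1) (row_mx v w) (col_mx r1 r2)
    (block_mx (d 0 j)%:M 0 0 (q * d 0 j)%:M) (block_mx 0 0 1%:M 0).
  case.
  - by rewrite mul_col_row f1 f2 f4 f5 -scalar_mx_block.
  - by rewrite /mZ /= mul_mx_row mul_row_block !mulmx0 addr0 add0r Zv Zw.
  - by rewrite /mX /= mul_mx_row mul_row_block !mulmx0 mulmx1 add0r addr0 {2}/w mulmxA VX mul0mx.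
  - by rewrite /mZ /= mul_col_mx mul_block_col !mul0mx addr0 add0r r1Z r2Z !mul_scalar_mx.
  - by rewrite /mX /= mul_col_mx mul_block_col !mul0mx ?addr0 ?add0r mul1mx r1X r2X.
  - by [].
  move=> M' [lt iso]; exists (Dm q (d 0 j) 1), M'; split => //.
  by right; exists (d 0 j); split.
have {}X0 : X = 0 by apply/matrixP => i j; rewrite mxE; move/negbFE/eqP: (X0 (i, j)).
pose i := Ordinal m_gt0.
have := @split_mod k (mkMod (diag_mx d) X) 1 (delta_mx i 0) (delta_mx 0 i) (d 0 i)%:M 0.
case.
- by rewrite mul_delta_mx delta11.
- by rewrite /mZ /= diag_delta mul_mx_scalar.
- by rewrite /mX /= X0 mul0mx mulmx0.
- by rewrite /mZ /= delta_diag mul_scalar_mx.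
- by rewrite /mX /= X0 mul0mx mulmx0.
- by [].
move=> M' [lt iso]; exists (Sm (d 0 i)), M'; split => //.
by left; exists (d 0 i); split.
Qed.

Lemma diag_iso m' (Z X : 'M[k]_m'.+1) : Z ^+ (2 * n).+1 = Z ->
  exists (D : 'rV_(m'.+1)) (X' : 'M_(m'.+1)), wiso (mkMod Z X) (mkMod (diag_mx D) X').
Proof.
move=> VZ.
have q0 : q != 0.
  apply/eqP => q0; move: (prim_expr_order qprim); rewrite q0 expr0n.
  have -> : (2 * n == 0)%N = false by rewrite muln_eq0 /= eqn0Ngt n_gt0.
  by move/eqP; rewrite eq_sym oner_eq0.
have : exists2 rs, uniq rs & mxminpoly Z %| \prod_(x <- rs) ('X - x%:P).
  exists (0 :: [seq q ^+ i | i <- iota 0 (2 * n)]).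
    rewrite cons_uniq; apply/andP; split.
      by apply/mapP => [[i _ /eqP]]; rewrite eq_sym expf_eq0 (negPf q0) andbF.
    rewrite map_inj_in_uniq ?iota_uniq // => i j; rewrite !mem_iota !add0n => /andP[_ lti] /andP[_ ltj].
    by move/eqP; rewrite (eq_prim_root_expr qprim) !modn_small // => /eqP.
  apply: mxminpoly_min.
  rewrite big_cons big_map subr0.
  have -> : \prod_(j <- iota 0 (2 * n)) ('X - (q ^+ j)%:P) = 'X^(2 * n) - 1 :> {poly k}.
    by rewrite -(factor_Xn_sub_1 qprim) /index_iota subn0.
  by rewrite rmorphM rmorphB /= rmorphXn rmorph1 /= horner_mx_X mulrBr mulr1 -exprS VZ subrr.
move/(diagonalizableP Z) => [P Pu /diagonalizable_forPex [D /(simmxP Pu) PZ]].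
exists D, (P *m X *m invmx P), P, (invmx P); split.
- exact: mulVmx.
- exact: mulmxV.
- exact: PZ.
- by rewrite /mX /= mulmxKV.
Qed.

Lemma decomp (M : wmod k) : is_wmod n q M -> (0 < mdim M)%N ->
  exists B M', [/\ (mdim M' < mdim M)%N, wiso M (dsum B M') & repshape B].
Proof.
case: M => [m [Z X]]; case: m Z X => [|m'] Z X VM // _.
have [D [X' iso1]] := diag_iso X (proj1 (and3_rect (fun a b c => conj a (conj b c)) VM)).
have VMd := wiso_valid iso1 VM.
have [B [M' [lt iso2 rs]]] := split_diag (ltn0Sn m') VMd.
by exists B, M'; split => //; exact: wiso_trans iso1 iso2.
Qed.

End Diag.

Section Inv.
Variable k : fieldType.
Variables (n : nat) (q a : k).

Definition eZ (mu : k) (M : wmod k) : int :=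
  (mdim M)%:Z - (\rank (mZ M - mu%:M))%:Z.
Definition tX (mu : k) (M : wmod k) : int :=
  (\rank (mX M))%:Z - (\rank (mX M *m (mZ M - mu%:M)))%:Z.

Lemma rank_conj m p (f : 'M[k]_(p, m)) (g : 'M_(m, p)) (A : 'M_m) :
  g *m f = 1%:M -> \rank (f *m A *m g) = \rank A.
Proof.
move=> gf; apply/eqP; rewrite eqn_leq; apply/andP; split.
  exact: leq_trans (mxrankM_maxl _ _) (mxrankM_maxr _ _).
have e : g *m (f *m A *m g) *m f = A by rewrite !mulmxA gf mul1mx -mulmxA gf mulmx1.
rewrite -{1}e; exact: leq_trans (mxrankM_maxl _ _) (mxrankM_maxr _ _).
Qed.

Lemma wiso_dim (M N : wmod k) : wiso M N -> mdim M = mdim N.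
Proof.
case=> f [g [gf fg _ _]]; apply/eqP; rewrite eqn_leq; apply/andP; split.
  by rewrite -{1}(mxrank1 k (mdim M)) -gf; exact: leq_trans (mxrankM_maxr _ _) (rank_leq_row _).
by rewrite -{1}(mxrank1 k (mdim N)) -fg; exact: leq_trans (mxrankM_maxr _ _) (rank_leq_row _).
Qed.

Lemma conj_sub m p (f : 'M[k]_(p, m)) (g : 'M_(m, p)) (A : 'M_m) mu :
  f *m g = 1%:M -> f *m A *m g - mu%:M = f *m (A - mu%:M) *m g.
Proof. by move=> fg; rewrite mulmxBr mulmxBl mul_mx_scalar -scalemxAl fg scalemx1. Qed.

Lemma eZ_iso mu (M N : wmod k) : wiso M N -> eZ mu M = eZ mu N.
Proof.
move=> iso; rewrite /eZ; congr (_ - (_)%:Z); first by rewrite (wiso_dim iso).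
case: iso => f [g [gf fg fZ fX]].
by rewrite (conj_eq' fg fZ) (conj_sub _ _ fg) rank_conj.
Qed.

Lemma tX_iso mu (M N : wmod k) : wiso M N -> tX mu M = tX mu N.
Proof.
case=> f [g [gf fg fZ fX]]; rewrite /tX (conj_eq' fg fZ) (conj_eq' fg fX) (conj_sub _ _ fg).
rewrite !rank_conj //.
have -> : f *m mX M *m g *m (f *m (mZ M - mu%:M) *m g) = f *m (mX M *m (mZ M - mu%:M)) *m g.
  by rewrite !mulmxA -(mulmxA _ g f) gf mulmx1.
by rewrite rank_conj.
Qed.

Lemma blk_sub m1 m2 (A : 'M[k]_m1) (B : 'M_m2) mu :
  block_mx A 0 0 B - mu%:M = block_mx (A - mu%:M) 0 0 (B - mu%:M).
Proof. by rewrite [mu%:M](scalar_mx_block m1 m2) opp_block_mx add_block_mx !subr0. Qed.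

Lemma eZ_dsum mu (M N : wmod k) : eZ mu (dsum M N) = eZ mu M + eZ mu N.
Proof.
rewrite /eZ.
have -> : mZ (dsum M N) - mu%:M = block_mx (mZ M - mu%:M) 0 0 (mZ N - mu%:M) := blk_sub _ _ _.
rewrite rank_diag_block_mx.
have -> : mdim (dsum M N) = (mdim M + mdim N)%N by [].
by rewrite !PoszD opprD addrACA.
Qed.

Lemma tX_dsum mu (M N : wmod k) : tX mu (dsum M N) = tX mu M + tX mu N.
Proof.
rewrite /tX.
have -> : mZ (dsum M N) - mu%:M = block_mx (mZ M - mu%:M) 0 0 (mZ N - mu%:M) := blk_sub _ _ _.
have -> : mX (dsum M N) = block_mx (mX M) 0 0 (mX N) by [].
rewrite block_diag_mul' !rank_diag_block_mx.
by rewrite !PoszD opprD addrACA.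
Qed.

Lemma rank11 (x : k) : \rank (x%:M : 'M_1) = (x != 0).
Proof.
case: (eqVneq x 0) => [->|nz]; first by rewrite raddf0 mxrank0.
by rewrite mxrank_unit // unitmxE det_scalar1 unitfE.
Qed.

Lemma eZ_Sm mu c : eZ mu (Sm c) = (c == mu)%:R.
Proof.
rewrite /eZ mZ_Sm -raddfB rank11 subr_eq0.
by case: (c == mu).
Qed.

Lemma tX_Sm mu c : tX mu (Sm c) = 0.
Proof. by rewrite /tX mX_Sm mul0mx mxrank0 subrr. Qed.

Lemma eZ_Dm mu l : eZ mu (Dm q l 1) = (l == mu)%:R + (q * l == mu)%:R.
Proof.
rewrite /eZ mZ_Dm.
have -> : block_mx l%:M 0 0 (q * l)%:M - mu%:M =
   block_mx (l - mu)%:M 0 0 (q * l - mu)%:M :> 'M_(1 + 1) by rewrite blk_sub -!raddfB.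
rewrite rank_diag_block_mx !rank11 !subr_eq0.
by case: (l == mu); case: (q * l == mu).
Qed.

Lemma tX_Dm mu l : tX mu (Dm q l 1) = (l == mu)%:R.
Proof.
rewrite /tX mZ_Dm mX_Dm.
have -> : block_mx l%:M 0 0 (q * l)%:M - mu%:M =
   block_mx (l - mu)%:M 0 0 (q * l - mu)%:M :> 'M_(1 + 1) by rewrite blk_sub -!raddfB.
rewrite (@mulmx_block _ 1 1 1 1 1 1) !mulmx0 !mul0mx !addr0 mul1mx.
rewrite !block_mxEv !row_mx0 !rank_col_0mx !rank_row_mx0 mxrank1 rank11 subr_eq0.
by case: (l == mu).
Qed.

End Inv.

Section Final.
Variable k : fieldType.
Variables (n : nat) (q a : k).
Hypothesis n_gt0 : (0 < n)%N.
Hypothesis qprim : (2 * n).-primitive_root q.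

Local Notation bc := (bcMod n q a).
Local Notation cd := (cdMod n q a).
Local Notation B := (basis_comb n q a).

Lemma coef_seq (x : fz k) P : coef x P = \sum_(e <- x) e.1 * (e.2 == P)%:R.
Proof.
rewrite /coef big_mkcond; apply: eq_bigr => e _.
by case: (e.2 == P); rewrite ?mulr1 ?mulr0.
Qed.

Lemma coefB lam mu P : coef (B lam mu) P =
  \sum_(i <- iota 0 (2 * n)) \sum_(j <- iota 0 2) lam i j * (bc i j == P)%:R
  + \sum_(l <- iota 0 2) mu l * (cd l == P)%:R.
Proof. by rewrite coef_seq /basis_comb big_cat big_allpairs_dep /= !big_cons !big_nil. Qed.

Lemma sum_iota_delta (F : nat -> int) N l : (l < N)%N ->
  \sum_(i <- iota 0 N) (i == l)%:R * F i = F l.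
Proof.
move=> lN; rewrite (bigD1_seq l) ?mem_iota ?iota_uniq //= eqxx mul1r big1 ?addr0 //.
by move=> i /negPf ->; rewrite mul0r.
Qed.

Definition spannable (x : fz k) := exists lam mu, green_eq n q x (B lam mu).

Lemma span_ext x y : green_eq n q x y -> spannable y -> spannable x.
Proof. by move=> e [lam [mu e']]; exists lam, mu; exact: green_eq_trans e e'. Qed.

Lemma span_nil : spannable [::].
Proof.
exists (fun _ _ => 0), (fun _ => 0); apply: (green_eq_ext _ _ (green_eq_refl n q [::])) => // P. rewrite coefB coef_nil !big1 ?addr0 // => i _; first by rewrite mul0r.
  by rewrite big1 // => j _; rewrite mul0r.
Qed.

Lemma span_cat x y : spannable x -> spannable y -> spannable (x ++ y).
Proof.
move=> [lam [mu ex]] [lam' [mu' ey]].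
exists (fun i j => lam i j + lam' i j), (fun l => mu l + mu' l).
apply: (green_eq_ext _ _ (green_eq_cat ex ey)) => // P.
rewrite coef_cat !coefB addrACA -!big_split /=; congr (_ + _).
  by apply: eq_bigr => i _; rewrite -big_split; apply: eq_bigr => j _; rewrite mulrDl.
by apply: eq_bigr => l _; rewrite mulrDl.
Qed.

Lemma span_sc c x : spannable x -> spannable (sc c x).
Proof.
move=> [lam [mu ex]]; exists (fun i j => c * lam i j), (fun l => c * mu l).
apply: (green_eq_ext _ _ (green_eq_sc c ex)) => // P.
rewrite coef_sc !coefB mulrDr !mulr_sumr; congr (_ + _).
  by apply: eq_bigr => i _; rewrite mulr_sumr; apply: eq_bigr => j _; rewrite mulrA.
by apply: eq_bigr => l _; rewrite mulrA.
Qed.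

Lemma span_bc i j : (i < 2 * n)%N -> (j < 2)%N -> spannable [:: (1, bc i j)].
Proof.
move=> iN jN; exists (fun i' j' => ((i' == i) && (j' == j))%:R), (fun _ => 0).
apply: (green_eq_ext _ _ (green_eq_refl n q _)) => // P.
rewrite coefB coef_cons coef_nil addr0 [X in _ + X]big1 ?addr0; last by move=> l _; rewrite mul0r.
under eq_bigr => i' _ do under eq_bigr => j' _ do rewrite -mulnb natrM -mulrA.
under eq_bigr => i' _ do rewrite -mulr_sumr.
rewrite sum_iota_delta // sum_iota_delta //=.
by case: (bc i j == P).
Qed.

Lemma span_cd l : (l < 2)%N -> spannable [:: (1, cd l)].
Proof.
move=> lN; exists (fun _ _ => 0), (fun l' => (l' == l)%:R).
apply: (green_eq_ext _ _ (green_eq_refl n q _)) => // P.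
rewrite coefB coef_cons coef_nil addr0 big1 ?add0r; last first.
  by move=> i _; rewrite big1 // => j _; rewrite mul0r.
rewrite sum_iota_delta //=.
by case: (cd l == P).
Qed.


Lemma root_class (c : k) : c ^+ (2 * n).+1 = c -> c = 0 \/ exists2 l, (l < 2 * n)%N & c = q ^+ l.
Proof.
move=> hc; case: (eqVneq c 0) => [->|nz]; [by left | right].
have : c ^+ (2 * n) = 1 by apply: (mulfI nz); rewrite -exprS hc mulr1.
by case/(prim_rootP qprim) => l ->; exists l.
Qed.

Lemma valid_Sm_q l : is_wmod n q (Sm (q ^+ l)).
Proof. by apply: Sm_valid; exact: qpow_root. Qed.

Lemma valid_Dm_q l : is_wmod n q (Dm q (q ^+ l) 1).
Proof. by apply: Dm_valid; [exact: hq | exact: qpow_root]. Qed.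

Lemma valid_Sm0 : is_wmod n q (Sm (0 : k)).
Proof. by apply: Sm_valid; rewrite expr0n. Qed.

Lemma valid_Dm0 : is_wmod n q (Dm q 0 1).
Proof. by apply: Dm_valid; [exact: hq | rewrite expr0n]. Qed.

Lemma span_rep (M : wmod k) : repshape n q M -> is_wmod n q M -> spannable [:: (1, M)].
Proof.
move=> [[c [-> hc]] | [l [-> hl]]] VM.
  case: (root_class hc) => [->|[l lN ->]].
    by rewrite -(cd0 n q a); apply: span_cd.
  apply: (span_ext _ (span_bc lN (isT : (0 < 2)%N))).
  apply: green_eq_iso => //; first exact: valid_Sm_q.
    by apply: (wiso_valid (wiso_sym (bc0 n q a l))); exact: valid_Sm_q.
  exact: wiso_sym (bc0 n q a l).
case: (root_class hl) => [->|[l' lN ->]].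
  by rewrite -(cd1 n q a); apply: span_cd.
apply: (span_ext _ (span_bc lN (isT : (1 < 2)%N))).
apply: green_eq_iso => //; first exact: valid_Dm_q.
  by apply: (wiso_valid (wiso_sym (bc1 a n_gt0 qprim l'))); exact: valid_Dm_q.
exact: wiso_sym (bc1 a n_gt0 qprim l').
Qed.

Lemma span_zero (M : wmod k) : mdim M = 0%N -> is_wmod n q M -> spannable [:: (1, M)].
Proof.
case: M => [m [Z X]] /= m0 VM; move: Z X VM; rewrite m0 => Z X VM.
have ed : dsum (mkMod Z X) (mkMod Z X) = mkMod Z X.
  by rewrite /dsum; congr mkMod; apply/matrixP => i; case: i.
apply: (span_ext _ span_nil).
exists [:: (-1, [:: (1, dsum (mkMod Z X) (mkMod Z X)); (-1, mkMod Z X); (-1, mkMod Z X)])].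
split.
  by move=> p; rewrite inE => /eqP -> /=; left; exists (mkMod Z X), (mkMod Z X).
move=> P; rewrite big_cons big_nil ed !coef_cons !coef_nil /=.
by case: (_ == P); rewrite ?subr0 ?addr0 //= mulN1r !addr0 opprB opprK addrK.
Qed.

Lemma span_one m (M : wmod k) : (mdim M < m)%N -> is_wmod n q M -> spannable [:: (1, M)].
Proof.
elim: m M => [|m IH] M //.
rewrite ltnS => lt VM.
case: (posnP (mdim M)) => [m0|pos]; first exact: span_zero.
have [Bm [M' [lt' iso rs]]] := decomp n_gt0 qprim VM pos.
have VD := wiso_valid iso VM.
have [VB VM'] := (dsum_valid _ _ _ _).1 VD.
apply: (span_ext _ (span_cat (span_rep rs VB) (IH M' (leq_trans lt' lt) VM'))).
apply: green_eq_trans (green_eq_iso VM VD iso) _.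
exact: green_eq_dsum.
Qed.

Lemma span_all (x : fz k) : all_valid n q x -> spannable x.
Proof.
elim: x => [|e x IH] V; first exact: span_nil.
have -> : e :: x = [:: e] ++ x by [].
apply: span_cat; last by apply: IH => f fin; apply: V; rewrite inE fin orbT.
have Ve : is_wmod n q e.2 by apply: V; rewrite inE eqxx.
have := span_sc e.1 (span_one (ltnSn (mdim e.2)) Ve).
apply: span_ext; apply: (green_eq_ext _ _ (green_eq_refl n q [:: e])) => P; rewrite /sc /= !coef_cons /= ?mulr1 //.
Qed.


Definition ww (i j : nat) : seq 'I_3 := if j == 0%N then nseq i b3 else nseq i b3 ++ [:: c3].
Definition cw (l : nat) : seq 'I_3 := if l == 0%N then [:: d3] else [:: c3; d3].
Definition wlist (lam : nat -> nat -> int) (mu : nat -> int) : seq (int * seq 'I_3) :=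
  [seq (lam i j, ww i j) | i <- iota 0 (2 * n), j <- iota 0 2] ++ [seq (mu l, cw l) | l <- iota 0 2].

Lemma GE_one c (M W : wmod k) : green_eq n q [:: (1, M)] [:: (1, W)] ->
  green_eq n q [:: (c, M)] [:: (c, W)].
Proof.
move/(green_eq_sc c); apply: green_eq_ext => P; by rewrite /sc /= !coef_cons /= mulr1.
Qed.

Lemma GE_map (s : seq nat) (c : nat -> int) (A : nat -> wmod k) (W : nat -> seq 'I_3) :
  (forall t, t \in s -> green_eq n q [:: (1, A t)] [:: (1, wordMod n q a (W t))]) ->
  green_eq n q [seq (c t, A t) | t <- s]
    [seq (w.1, wordMod n q a w.2) | w <- [seq (c t, W t) | t <- s]].
Proof.
elim: s => [|t s IH] H; first exact: green_eq_refl.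
have -> : [seq (c t, A t) | t <- t :: s] = [:: (c t, A t)] ++ [seq (c t, A t) | t <- s] by [].
have -> : [seq (w.1, wordMod n q a w.2) | w <- [seq (c t, W t) | t <- t :: s]] =
  [:: (c t, wordMod n q a (W t))] ++ [seq (w.1, wordMod n q a w.2) | w <- [seq (c t, W t) | t <- s]] by [].
apply: green_eq_cat; first by apply: GE_one; apply: H; rewrite inE eqxx.
by apply: IH => t' t'in; apply: H; rewrite inE t'in orbT.
Qed.

Lemma GE_allpairs (r1 r2 : seq nat) (c : nat -> nat -> int) (A : nat -> nat -> wmod k)
    (W : nat -> nat -> seq 'I_3) :
  (forall i j, i \in r1 -> j \in r2 ->
     green_eq n q [:: (1, A i j)] [:: (1, wordMod n q a (W i j))]) ->
  green_eq n q [seq (c i j, A i j) | i <- r1, j <- r2]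
    [seq (w.1, wordMod n q a w.2) | w <- [seq (c i j, W i j) | i <- r1, j <- r2]].
Proof.
elim: r1 => [|i r1 IH] H; first exact: green_eq_refl.
rewrite /= map_cat; apply: green_eq_cat.
  by apply: GE_map => j jin; apply: H => //; rewrite inE eqxx.
by apply: IH => i' j i'in jin; apply: H => //; rewrite inE i'in orbT.
Qed.

Lemma iso_ge (M W R : wmod k) : wiso M R -> wiso W R -> is_wmod n q R ->
  green_eq n q [:: (1, M)] [:: (1, W)].
Proof.
move=> iM iW VR; apply: green_eq_iso.
- exact: wiso_valid (wiso_sym iM) VR.
- exact: wiso_valid (wiso_sym iW) VR.
- exact: wiso_trans iM (wiso_sym iW).
Qed.

Lemma span_words lam mu :
  green_eq n q (B lam mu) [seq (w.1, wordMod n q a w.2) | w <- wlist lam mu].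
Proof.
rewrite /basis_comb /wlist map_cat; apply: green_eq_cat.
  apply: GE_allpairs => i j _; rewrite /= !inE => /orP [] /eqP -> /=.
    exact: iso_ge (bc0 n q a i) (w0 n q a i) (valid_Sm_q i).
  exact: iso_ge (bc1 a n_gt0 qprim i) (w1 a n_gt0 qprim i) (valid_Dm_q i).
apply: GE_map => l; rewrite /= !inE => /orP [] /eqP ->.
  by rewrite (_ : cw 0 = [:: d3]) // cd0 wd; exact: green_eq_refl.
by rewrite (_ : cw 1 = [:: c3; d3]) // cd1 wcd; exact: green_eq_refl.
Qed.

Lemma PhiB (phi : wmod k -> int) lam mu : Phi phi (B lam mu) =
  \sum_(i <- iota 0 (2 * n)) (lam i 0%N * phi (bc i 0) + lam i 1%N * phi (bc i 1))
  + (mu 0%N * phi (cd 0) + mu 1%N * phi (cd 1)).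
Proof.
rewrite /Phi /basis_comb big_cat big_allpairs_dep /= !big_cons !big_nil /= !addr0.
by congr (_ + _); apply: eq_bigr => i _; rewrite !big_cons big_nil addr0.
Qed.

Lemma eqq i l : (i < 2 * n)%N -> (l < 2 * n)%N -> (q ^+ i == q ^+ l) = (i == l).
Proof. by move=> il ll; rewrite (eq_prim_root_expr qprim) !modn_small. Qed.

Lemma q0' i : (q ^+ i == 0) = false.
Proof. exact: negbTE (qpow_neq0 n_gt0 qprim i). Qed.

Lemma indep lam mu : green_eq n q (B lam mu) [::] ->
  (forall i j, (i < 2 * n)%N -> (j < 2)%N -> lam i j = 0) /\ (forall l, (l < 2)%N -> mu l = 0).
Proof.
move=> H.
have PE : forall phi : wmod k -> int, (forall M N, phi (dsum M N) = phi M + phi N) ->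
    (forall M N, wiso M N -> phi M = phi N) -> Phi phi (B lam mu) = 0.
  by move=> phi Hd Hi; rewrite (Phi_green Hd Hi H) /Phi big_nil.
have Pt := fun mu0 => PE (tX mu0) (tX_dsum mu0) (fun M N => tX_iso mu0 (M:=M) (N:=N)).
have Pe := fun mu0 => PE (eZ mu0) (eZ_dsum mu0) (fun M N => eZ_iso mu0 (M:=M) (N:=N)).
have tb0 : forall mu0 i, tX mu0 (bc i 0) = 0 by move=> mu0 i; rewrite (tX_iso _ (bc0 n q a i)) tX_Sm.
have tb1 : forall mu0 i, tX mu0 (bc i 1) = (q ^+ i == mu0)%:R.
  by move=> mu0 i; rewrite (tX_iso _ (bc1 a n_gt0 qprim i)) tX_Dm.
have eb0 : forall mu0 i, eZ mu0 (bc i 0) = (q ^+ i == mu0)%:R.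
  by move=> mu0 i; rewrite (eZ_iso _ (bc0 n q a i)) eZ_Sm.
have eb1 : forall mu0 i, eZ mu0 (bc i 1) = (q ^+ i == mu0)%:R + (q * q ^+ i == mu0)%:R.
  by move=> mu0 i; rewrite (eZ_iso _ (bc1 a n_gt0 qprim i)) eZ_Dm.
have tc0 : forall mu0, tX mu0 (cd 0) = 0 by move=> mu0; rewrite cd0 tX_Sm.
have tc1 : forall mu0, tX mu0 (cd 1) = (0 == mu0)%:R by move=> mu0; rewrite cd1 tX_Dm.
have ec0 : forall mu0, eZ mu0 (cd 0) = (0 == mu0)%:R by move=> mu0; rewrite cd0 eZ_Sm.
have ec1 : forall mu0, eZ mu0 (cd 1) = (0 == mu0)%:R + (q * 0 == mu0)%:R.
  by move=> mu0; rewrite cd1 eZ_Dm.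
have lam1 : forall l, (l < 2 * n)%N -> lam l 1%N = 0.
  move=> l lN; have := Pt (q ^+ l); rewrite PhiB.
  rewrite (eq_big_seq (fun i => (i == l)%:R * lam i 1%N)); last first.
    move=> i; rewrite mem_iota add0n => /andP [_ iN].
    by rewrite tb0 tb1 mulr0 add0r (eqq iN lN) mulrC.
  rewrite sum_iota_delta // tc0 tc1 eq_sym q0' !mulr0 ?addr0 ?add0r.
  by [].
have mu1 : mu 1%N = 0.
  have := Pt 0; rewrite PhiB.
  rewrite (eq_big_seq (fun i => 0)); last first.
    by move=> i _; rewrite tb0 tb1 q0' !mulr0 add0r.
  by rewrite big1_eq tc0 tc1 eqxx mulr0 mulr1 !add0r.
have lam0 : forall l, (l < 2 * n)%N -> lam l 0%N = 0.
  move=> l lN; have := Pe (q ^+ l); rewrite PhiB.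
  rewrite (eq_big_seq (fun i => (i == l)%:R * lam i 0%N)); last first.
    move=> i; rewrite mem_iota add0n => /andP [_ iN].
    by rewrite eb0 eb1 (lam1 _ iN) mul0r addr0 (eqq iN lN) mulrC.
  by rewrite sum_iota_delta // ec0 ec1 mu1 mulr0 eq_sym q0' !mul0r !mulr0 !addr0.
have mu0 : mu 0%N = 0.
  have := Pe 0; rewrite PhiB.
  rewrite (eq_big_seq (fun i => 0)); last first.
    move=> i; rewrite mem_iota add0n => /andP [_ iN].
    by rewrite eb0 eb1 (lam1 _ iN) q0' mul0r mulr0 addr0.
  by rewrite big1_eq ec0 ec1 mu1 mul0r eqxx mulr1 !add0r addr0.
split.
  by move=> i j iN; case: j => [|[|j]] // _; [exact: lam0 | exact: lam1].
by case=> [|[|l]].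
Qed.

End Final.

Theorem corollary4p3 (k : closedFieldType) (n : nat) (q a : k) :
  [pchar k] =i pred0 -> (0 < n)%N -> (2 * n).-primitive_root q -> a != 0 ->
  [/\ (* r(wH_{4n}) is generated as a ring by b, c, d *)
      (forall x : fz k, all_valid n q x ->
         exists ws : seq (int * seq 'I_3),
           green_eq n q x [seq (w.1, wordMod n q a w.2) | w <- ws]),
      (* the b^i c^j (i < 2n, j < 2) and c^l d (l < 2) span r(wH_{4n}) *)
      (forall x : fz k, all_valid n q x ->
         exists (lam : nat -> nat -> int) (mu : nat -> int),
           green_eq n q x (basis_comb n q a lam mu)) &
      (* ... and are Z-linearly independent *)
      (forall (lam : nat -> nat -> int) (mu : nat -> int),
         green_eq n q (basis_comb n q a lam mu) [::] ->
         (forall i j, (i < 2 * n)%N -> (j < 2)%N -> lam i j = 0) /\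
         (forall l, (l < 2)%N -> mu l = 0))].
Proof.
move=> _ n_gt0 qprim _; split.
- move=> x V; have [lam [mu e]] := span_all a n_gt0 qprim V.
  exists (wlist n lam mu); exact: green_eq_trans e (span_words a n_gt0 qprim lam mu).
- by move=> x V; have [lam [mu e]] := span_all a n_gt0 qprim V; exists lam, mu.
- by move=> lam mu H; exact: (indep n_gt0 qprim H).
Qed.
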